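(* Let $(\Omega,\Sigma,\mu)$ be a finite measure space and let $X(\mu)$ be a Banach strictly rectangular function space with the subsequence property. Then: (i) If $h\in L^\infty(\mu)$ and $f\in X(\mu)$, then $hf\in X(\mu)$, $\||hf|\|\le\|h\|_\infty\||f|\|$ and $\|hf\|\le 4\|h\|_\infty\|f\|$. (ii) $X(\mu)$ is an ideal in $L^0(\mu)$: if $f\in L^0(\mu)$, $g\in X(\mu)$ and $|f|\le|g|$, then $f\in X(\mu)$. (iii) The norm of $X(\mu)$ is monotone, i.e. there is $C>0$ with $\|f\|\le C\|g\|$ whenever $f,g\in X(\mu)$, $0\le f\le g$; for such $C$, $\||g|-|h|\|\le 4C\|g-h\|$ for all $g,h\in X(\mu)$; and the map $V:X(\mu)\to X(\mu)$, $V(f)=|f|$, is continuous. (iv) $\|f\|_V:=\||f|\|$, $f\in X(\mu)$, defines a norm on $X(\mu)$ equivalent to $\|\cdot\|$, which coincides with $\|\cdot\|$ on $X(\mu)^+=\{f\in X(\mu):f\ge0\}$, and $(X(\mu),\|\cdot\|_V)$ is a Banach function space.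
   Context: $L^0(\mu)$ is the space of equivalence classes (modulo $\mu$-a.e. equality) of real $\Sigma$-measurable functions, ordered $\mu$-a.e. A Banach strictly rectangular function space is a vector subspace $X(\mu)\subseteq L^0(\mu)$ with a complete norm such that $\chi_Af\in X(\mu)$ and $\|\chi_Af\|\le\|f\|$ for all $f\in X(\mu)$, $A\in\Sigma$. Subsequence property: whenever $f_n,f\in X(\mu)$ and $f_n\to f$ in norm, some subsequence converges to $f$ $\mu$-a.e. A Banach function space is a vector subspace of $L^0(\mu)$ with a complete norm which is an ideal of $L^0(\mu)$ (if $f\in L^0(\mu)$, $g$ in the space, $|f|\le|g|$, then $f$ is in the space) and whose norm is a Riesz norm ($|f|\le|g|$ implies $\|f\|\le\|g\|$). *)

(* Defs.v *)
From HB Require Import structures.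
From mathcomp Require Import all_boot all_order all_algebra.
From mathcomp Require Import all_classical all_reals all_analysis.
Set Implicit Arguments. Unset Strict Implicit. Unset Printing Implicit Defensive.
Import Order.TTheory GRing.Theory Num.Theory.
Import numFieldNormedType.Exports.
Local Open Scope classical_set_scope.
Local Open Scope ring_scope.

(* L^0(mu) is modelled by (measurable) representatives f : T -> R, with all
   notions taken modulo mu-a.e. equality.  A function space is given by a
   carrier predicate Xs on representatives (closed under a.e. equality) and a
   norm nrm which only depends on the a.e.-class. *)
Section FunctionSpaces.
Context {d : measure_display} {T : measurableType d} {R : realType}.
Variable mu : {measure set T -> \bar R}.

Definition L0 (f : T -> R) : Prop := measurable_fun [set: T] f.

Definition aeq (f g : T -> R) : Prop := \forall x \ae mu, f x = g x.
Definition ale (f g : T -> R) : Prop := \forall x \ae mu, f x <= g x.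

Definition vector_subspace_L0 (Xs : set (T -> R)) : Prop :=
  [/\ forall f, Xs f -> L0 f,
      forall f g, Xs f -> L0 g -> aeq f g -> Xs g,
      Xs (fun _ => 0),
      forall f g, Xs f -> Xs g -> Xs (fun x => f x + g x) &
      forall (a : R) f, Xs f -> Xs (fun x => a * f x)].

Definition is_norm_on (Xs : set (T -> R)) (nrm : (T -> R) -> R) : Prop :=
  [/\ forall f g, Xs f -> Xs g -> aeq f g -> nrm f = nrm g,
      forall f, Xs f -> 0 <= nrm f,
      forall f, Xs f -> (nrm f = 0 <-> aeq f (fun _ => 0)),
      forall (a : R) f, Xs f -> nrm (fun x => a * f x) = `|a| * nrm f &
      forall f g, Xs f -> Xs g -> nrm (fun x => f x + g x) <= nrm f + nrm g].

Definition complete_for (Xs : set (T -> R)) (nrm : (T -> R) -> R) : Prop :=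
  forall u : nat -> T -> R, (forall n, Xs (u n)) ->
    (forall e : R, 0 < e -> exists N : nat, forall m n : nat, (N <= m)%N -> (N <= n)%N ->
        nrm (fun x => u m x - u n x) < e) ->
    exists f, Xs f /\ (fun n => nrm (fun x => u n x - f x)) @ \oo --> (0 : R).

Definition banach_subspace_L0 Xs nrm : Prop :=
  [/\ vector_subspace_L0 Xs, is_norm_on Xs nrm & complete_for Xs nrm].

Definition strictly_rectangular (Xs : set (T -> R)) (nrm : (T -> R) -> R) : Prop :=
  forall f (A : set T), Xs f -> measurable A ->
    Xs (fun x => \1_A x * f x) /\ nrm (fun x => \1_A x * f x) <= nrm f.

Definition banach_strictly_rectangular Xs nrm : Prop :=
  banach_subspace_L0 Xs nrm /\ strictly_rectangular Xs nrm.

Definition subsequence_property (Xs : set (T -> R)) (nrm : (T -> R) -> R) : Prop :=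
  forall (u : nat -> T -> R) (f : T -> R), (forall n, Xs (u n)) -> Xs f ->
    (fun n => nrm (fun x => u n x - f x)) @ \oo --> (0 : R) ->
    exists phi : nat -> nat, (forall n, (phi n < phi n.+1)%N) /\
      \forall x \ae mu, (fun n => u (phi n) x) @ \oo --> f x.

Definition ideal_L0 (Xs : set (T -> R)) : Prop :=
  forall f g, L0 f -> Xs g -> ale (fun x => `|f x|) (fun x => `|g x|) -> Xs f.

Definition riesz_norm (Xs : set (T -> R)) (nrm : (T -> R) -> R) : Prop :=
  forall f g, Xs f -> Xs g -> ale (fun x => `|f x|) (fun x => `|g x|) -> nrm f <= nrm g.

Definition banach_function_space Xs nrm : Prop :=
  [/\ banach_subspace_L0 Xs nrm, ideal_L0 Xs & riesz_norm Xs nrm].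

Definition Linf (h : T -> R) : Prop :=
  L0 h /\ (Lnorm mu +oo%E (EFin \o h) < +oo)%E.
Definition Linf_norm (h : T -> R) : R := fine (Lnorm mu +oo%E (EFin \o h)).

Definition monotone_with (Xs : set (T -> R)) (nrm : (T -> R) -> R) (C : R) : Prop :=
  forall f g, Xs f -> Xs g -> ale (fun _ => 0) f -> ale f g -> nrm f <= C * nrm g.

End FunctionSpaces.

(* Main.v *)
Require Import Defs.
From HB Require Import structures.
From mathcomp Require Import all_boot all_order all_algebra.
From mathcomp Require Import all_classical all_reals all_analysis.
From mathcomp Require Import measurable_realfun ess_sup_inf.
From mathcomp Require Import ring lra.
Set Implicit Arguments. Unset Strict Implicit. Unset Printing Implicit Defensive.
Import Order.TTheory GRing.Theory Num.Theory.
Import numFieldNormedType.Exports.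
Local Open Scope classical_set_scope.
Local Open Scope ring_scope.

Section Greedy.
Context d (T : measurableType d) (R : realType).

Definition cc (n : nat) : R := (2^-1) ^+ n.+1.

Fixpoint rr (s : T -> R) (n : nat) : T -> R :=
  match n with
  | 0 => s
  | n.+1 => fun x => rr s n x - cc n * \1_[set y | cc n <= rr s n y] x
  end.

Lemma cc_ge0 n : 0 <= cc n.
Proof. by rewrite /cc exprn_ge0 // invr_ge0. Qed.

Lemma ccE n : cc n = (2^-1) ^+ n - (2^-1) ^+ n.+1.
Proof. by rewrite /cc exprS; field. Qed.

Lemma mset (g : T -> R) (a : R) : measurable_fun setT g -> measurable [set y | a <= g y].
Proof.
move=> mg.
have -> : [set y | a <= g y] = setT `&` g @^-1` `[a, +oo[.
  by apply/seteqP; split => x /=; rewrite in_itv /= andbT => // -[].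
by apply: mg => //; exact: measurable_itv.
Qed.

Lemma rr_meas s n : measurable_fun setT s -> measurable_fun setT (rr s n).
Proof.
move=> ms; elim: n => [//|n IH] /=.
apply: (measurable_funB IH).
apply: measurable_funM; first exact: measurable_cst.
exact/measurable_indic/mset.
Qed.

Lemma rr_bound s n x : 0 <= s x <= 1 -> 0 <= rr s n x <= (2^-1) ^+ n.
Proof.
move=> h; elim: n => [|n IH] /=; first by rewrite expr0.
have e := ccE n; rewrite /cc in e *.
set a := rr s n x in IH *; set b := (2^-1 : R) ^+ n in IH e *.
set c := (2^-1 : R) ^+ n.+1 in e *.
move/andP: IH => [IH1 IH2].
rewrite indicE; case: (boolP (x \in _)) => hc.
  move/set_mem: hc => /= hc; have {}hc : c <= a := hc.
  by rewrite (_ : (true%:R : R) = 1) // mulr1; apply/andP; split; lra.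
have hc' : a < c.
  by move: hc; rewrite notin_setE /= ltNge => hc; apply/negP.
by rewrite (_ : (false%:R : R) = 0) // mulr0; apply/andP; split; lra.
Qed.
End Greedy.

Section Aux.
Context (R : realType).

Lemma inv_meas : measurable_fun setT (@GRing.inv R).
Proof.
rewrite -(setvU [set (0 : R)]).
apply/measurable_funU.
- by apply: measurableC; exact: measurable_set1.
- exact: measurable_set1.
split.
- apply: open_continuous_measurable_fun.
    apply: closed_openC; apply: accessible_closed_set1.
    exact: hausdorff_accessible (@Rhausdorff R).
  move=> x /set_mem hx; apply: inv_continuous; exact/eqP.
- apply: (eq_measurable_fun (fun _ : R => (0 : R))); last exact: measurable_cst.
  by move=> x /set_mem /= ->; rewrite invr0.
Qed.
End Aux.

Section Core.
Context d (T : measurableType d) (R : realType) (mu : {measure set T -> \bar R})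
  (Xs : set (T -> R)) (nrm : (T -> R) -> R).
Hypothesis HV : vector_subspace_L0 mu Xs.
Hypothesis HN : is_norm_on mu Xs nrm.
Hypothesis HC : complete_for Xs nrm.
Hypothesis HR : strictly_rectangular Xs nrm.
Hypothesis HS : subsequence_property mu Xs nrm.

Lemma XL0 {f} : Xs f -> L0 f. Proof. by case: HV => H _ _ _ _; exact: H. Qed.
Lemma Xae {f g} : Xs f -> L0 g -> aeq mu f g -> Xs g.
Proof. by case: HV => _ H _ _ _; exact: H. Qed.
Lemma X0 : Xs (fun _ => 0). Proof. by case: HV => _ _ H _ _; exact: H. Qed.
Lemma XD {f g} : Xs f -> Xs g -> Xs (fun x => f x + g x).
Proof. by case: HV => _ _ _ H _; exact: H. Qed.
Lemma XZ a {f} : Xs f -> Xs (fun x => a * f x).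
Proof. by case: HV => _ _ _ _ H; exact: H. Qed.
Lemma Nae {f g} : Xs f -> Xs g -> aeq mu f g -> nrm f = nrm g.
Proof. by case: HN => H _ _ _ _; exact: H. Qed.
Lemma Nge0 {f} : Xs f -> 0 <= nrm f. Proof. by case: HN => _ H _ _ _; exact: H. Qed.
Lemma N0 {f} : Xs f -> (nrm f = 0 <-> aeq mu f (fun _ => 0)).
Proof. by case: HN => _ _ H _ _; exact: H. Qed.
Lemma NZ a {f} : Xs f -> nrm (fun x => a * f x) = `|a| * nrm f.
Proof. by case: HN => _ _ _ H _; exact: H. Qed.
Lemma ND {f g} : Xs f -> Xs g -> nrm (fun x => f x + g x) <= nrm f + nrm g.
Proof. by case: HN => _ _ _ _ H; exact: H. Qed.

Lemma NZp a {f} : Xs f -> 0 <= a -> nrm (fun x => a * f x) = a * nrm f.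
Proof. by move=> Xf a0; rewrite NZ //; congr (_ * _); exact: ger0_norm. Qed.

Lemma NN1 {f} : Xs f -> nrm (fun x => -1 * f x) = nrm f.
Proof.
move=> Xf; rewrite NZ // -[RHS]mul1r; congr (_ * _).
exact: normrN1.
Qed.

Lemma Nzero : nrm (fun _ => 0) = 0.
Proof. by apply/(N0 X0); apply: nearW. Qed.

Lemma Xsub {f g} : Xs f -> Xs g -> Xs (fun x => f x - g x).
Proof.
move=> Xf Xg.
suff -> : (fun x => f x - g x) = (fun x => f x + (-1) * g x) by apply: XD => //; apply: XZ.
by apply: funext => x; rewrite mulN1r.
Qed.

Lemma Nsym {f g} : Xs f -> Xs g -> nrm (fun x => f x - g x) = nrm (fun x => g x - f x).
Proof.
move=> Xf Xg.
have -> : (fun x => f x - g x) = (fun x => -1 * (g x - f x)).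
  by apply: funext => x; rewrite mulN1r opprB.
by rewrite NN1 //; exact: Xsub.
Qed.

Lemma partial s f : measurable_fun setT s -> Xs f -> forall n k,
  Xs (fun x => (rr s n x - rr s (n + k) x) * f x) /\
  nrm (fun x => (rr s n x - rr s (n + k) x) * f x)
     <= ((2^-1) ^+ n - (2^-1) ^+ (n + k)) * nrm f.
Proof.
move=> ms Xf n; elim => [|k [IH1 IH2]].
  rewrite addn0.
  have -> : (fun x => (rr s n x - rr s n x) * f x) = (fun _ => 0).
    by apply: funext => x; rewrite subrr mul0r.
  by rewrite subrr mul0r Nzero; split => //; exact: X0.
have mB : measurable [set y | cc R (n + k) <= rr s (n + k) y].
  by apply: mset; exact: rr_meas.
have [XB NB] := HR Xf mB.
have -> : (fun x => (rr s n x - rr s (n + k.+1) x) * f x) =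
   (fun x => (rr s n x - rr s (n + k) x) * f x +
      cc R (n + k) * (\1_[set y | cc R (n + k) <= rr s (n + k) y] x * f x)).
  by apply: funext => x; rewrite addnS /=; ring.
split; first by apply: XD => //; exact: XZ.
apply: (le_trans (ND IH1 (XZ _ XB))).
rewrite NZp // ?cc_ge0 //.
have h1 := ler_wpM2l (cc_ge0 R (n + k)) NB.
apply: (le_trans (lerD IH2 h1)).
have e := ccE R (n + k); rewrite addnS e -mulrDl.
apply: ler_wpM2r; first exact: Nge0.
lra.
Qed.

Lemma geo_small (a : R) : 0 < a -> exists N, forall n, (N <= n)%N -> (2^-1 : R) ^+ n < a.
Proof.
move=> a0.
have h : `|(2^-1 : R)| < 1 by rewrite ger0_norm ?invr_ge0 // invf_lt1 // ltr1n.
have [N _ HK] := cvgr0_norm_lt _ (cvg_expr h) _ a0.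
exists N => n Nn; have := HK n Nn; rewrite /= ger0_norm //.
Qed.

Lemma b_ge0 n : 0 <= (2^-1 : R) ^+ n.
Proof. by rewrite exprn_ge0 // invr_ge0. Qed.

Lemma mult01_pw (s : T -> R) f : measurable_fun setT s -> (forall x, 0 <= s x <= 1) -> Xs f ->
  Xs (fun x => s x * f x) /\ nrm (fun x => s x * f x) <= nrm f.
Proof.
move=> ms s01 Xf.
pose u N := fun x => (rr s 0 x - rr s N x) * f x.
have Xu N : Xs (u N) by case: (partial ms Xf 0 N); rewrite add0n.
have Nu N : nrm (u N) <= nrm f.
  case: (partial ms Xf 0 N); rewrite add0n => _ H; apply: (le_trans H).
  rewrite -[leRHS]mul1r; apply: ler_wpM2r; first exact: Nge0.
  have := b_ge0 N; rewrite expr0; lra.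
have Hd n k : nrm (fun x => u (n + k)%N x - u n x) <= (2^-1) ^+ n * nrm f.
  case: (partial ms Xf n k) => _ H.
  have -> : (fun x => u (n + k)%N x - u n x) = (fun x => (rr s n x - rr s (n + k) x) * f x).
    by apply: funext => x; rewrite /u; ring.
  apply: (le_trans H); apply: ler_wpM2r; first exact: Nge0.
  have := b_ge0 (n + k); lra.
have Hcauchy : forall e : R, 0 < e -> exists N : nat, forall m n : nat, (N <= m)%N -> (N <= n)%N ->
        nrm (fun x => u m x - u n x) < e.
  move=> e e0.
  have nf0 : 0 < nrm f + 1 by rewrite ltr_wpDl // Nge0.
  have e1 : 0 < e / (nrm f + 1) by rewrite divr_gt0.
  have [N HK] := geo_small e1.
  exists N => m n Nm Nn.
  have key : forall p q, (N <= p)%N -> (p <= q)%N -> nrm (fun x => u q x - u p x) < e.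
    move=> p q Np pq; rewrite -(subnKC pq).
    apply: (le_lt_trans (Hd p (q - p)%N)).
    have := HK p Np; rewrite ltr_pdivlMr // => H.
    apply: le_lt_trans H; apply: ler_wpM2l; first exact: b_ge0.
    by rewrite lerDl.
  case: (leqP n m) => nm; first exact: key.
  rewrite Nsym //; exact: key _ _ Nm (ltnW nm).
have [g [Xg Hg]] := HC Xu Hcauchy.
have [phi [phiinc Hphi]] := HS Xu Xg Hg.
have phige n : (n <= phi n)%N.
  elim: n => [//|n IH]; exact: leq_ltn_trans IH (phiinc n).
have Hpw x : (fun n => u n x) @ \oo --> s x * f x.
  have Hr : (fun n => rr s n x) @ \oo --> (0 : R).
    apply: (@squeeze_cvgr _ _ _ _ (fun _ => 0) (fun n => (2^-1 : R) ^+ n)).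
    - by apply: nearW => n; exact: rr_bound.
    - exact: cvg_cst.
    - apply: cvg_expr; rewrite ger0_norm ?invr_ge0 // invf_lt1 // ltr1n // .
  have -> : s x * f x = (s x - 0) * f x by rewrite subr0.
  apply: cvgM; last exact: cvg_cst.
  apply: cvgB; first exact: cvg_cst.
  exact: Hr.
have Hsub x : (fun n => u (phi n) x) @ \oo --> s x * f x.
  apply: (cvg_comp phi (fun n => u n x) _ (Hpw x)).
  move=> P [N _ HK]; exists N => // n /= Nn; apply: HK.
  exact: leq_trans Nn (phige n).
have Hae : aeq mu g (fun x => s x * f x).
  apply: filterS Hphi => x Hx.
  exact: (cvg_unique (@Rhausdorff R) Hx (Hsub x)).
have L0sf : L0 (fun x => s x * f x) by apply: measurable_funM => //; exact: XL0.
have Xsf := Xae Xg L0sf Hae.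
split => //.
rewrite -(Nae Xg Xsf Hae).
apply/ler_addgt0Pr => e e0.
have [N _ HK] := cvgr0_norm_lt _ Hg _ e0.
have hN := HK N (leqnn N); rewrite /= ger0_norm in hN; last exact: Nge0 (Xsub (Xu N) Xg).
have eqg : nrm g = nrm (fun x => u N x + -1 * (u N x - g x)).
  by congr nrm; apply: funext => x; ring.
rewrite eqg; apply: (le_trans (ND (Xu N) (XZ _ (Xsub (Xu N) Xg)))).
rewrite NN1; last exact: Xsub.
by apply: lerD; [exact: Nu | exact: ltW].
Qed.

Lemma mult01 (s : T -> R) f : measurable_fun setT s ->
  (\forall x \ae mu, 0 <= s x <= 1) -> Xs f ->
  Xs (fun x => s x * f x) /\ nrm (fun x => s x * f x) <= nrm f.
Proof.
move=> ms s01 Xf.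
pose s' := (s \max cst 0) \min cst 1.
have ms' : measurable_fun setT s'.
  apply: measurable_minr; last exact: measurable_cst.
  by apply: measurable_maxr => //; exact: measurable_cst.
have s'01 x : 0 <= s' x <= 1.
  by rewrite /s' /= le_min ge_min le_max !lexx ler01 !orbT.
have [X' N'] := mult01_pw ms' s'01 Xf.
have L0sf : L0 (fun x => s x * f x) by apply: measurable_funM => //; exact: XL0.
have hae : aeq mu (fun x => s' x * f x) (fun x => s x * f x).
  apply: filterS s01 => x /andP[h0 h1].
  by rewrite /s' /= (max_l h0) (min_l h1).
have Xsf := Xae X' L0sf hae.
by split => //; rewrite -(Nae X' Xsf hae).
Qed.

Lemma mult1 (s : T -> R) f : measurable_fun setT s ->
  (\forall x \ae mu, `|s x| <= 1) -> Xs f ->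
  Xs (fun x => s x * f x) /\ nrm (fun x => s x * f x) <= 2 * nrm f.
Proof.
move=> ms s1 Xf.
have mn : measurable_fun setT (fun x => `|s x|).
  apply: measurableT_comp ms; exact: normr_measurable.
have msp : measurable_fun setT (fun x => (s x + `|s x|) / 2).
  apply: measurable_funM; last exact: measurable_cst.
  exact: measurable_funD.
have msn : measurable_fun setT (fun x => (`|s x| - s x) / 2).
  apply: measurable_funM; last exact: measurable_cst.
  exact: measurable_funB.
have [Xp Np] : Xs (fun x => (s x + `|s x|) / 2 * f x) /\
    nrm (fun x => (s x + `|s x|) / 2 * f x) <= nrm f.
  apply: mult01 => //; apply: filterS s1 => x h.
  case: (lerP 0 (s x)) => h0.
    by rewrite ger0_norm // in h *; apply/andP; split; lra.
  by rewrite ltr0_norm // in h *; apply/andP; split; lra.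

have [Xn Nn] : Xs (fun x => (`|s x| - s x) / 2 * f x) /\
    nrm (fun x => (`|s x| - s x) / 2 * f x) <= nrm f.
  apply: mult01 => //; apply: filterS s1 => x h.
  case: (lerP 0 (s x)) => h0.
    by rewrite ger0_norm // in h *; apply/andP; split; lra.
  by rewrite ltr0_norm // in h *; apply/andP; split; lra.
have -> : (fun x => s x * f x) = (fun x => (s x + `|s x|) / 2 * f x +
     -1 * ((`|s x| - s x) / 2 * f x)).
  by apply: funext => x; field.
split; first by apply: XD => //; exact: XZ.
apply: (le_trans (ND Xp (XZ _ Xn))); rewrite NN1 //.
by rewrite mulr2n mulrDl mul1r; apply: lerD.
Qed.

Lemma dom f g : L0 f -> Xs g -> ale mu (fun x => `|f x|) (fun x => `|g x|) ->
  Xs f /\ nrm f <= 2 * nrm g.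
Proof.
move=> mf Xg hfg.
pose h := fun x => f x * (g x)^-1.
have mh : measurable_fun setT h.
  apply: measurable_funM => //.
  exact: measurableT_comp (@inv_meas R) (XL0 Xg).
have h1 : \forall x \ae mu, `|h x| <= 1.
  apply: filterS hfg => x /= hx; rewrite /h normrM normfV.
  have [g0|g0] := eqVneq (g x) 0; first by rewrite g0 normr0 invr0 mulr0.
  by rewrite ler_pdivrMr ?normr_gt0 // mul1r.
have [Xhg Nhg] := mult1 mh h1 Xg.
have hae : aeq mu (fun x => h x * g x) f.
  apply: filterS hfg => x /= hx; rewrite /h.
  have [g0|g0] := eqVneq (g x) 0.
    by move: hx; rewrite g0 normr0 mulr0 normr_le0 => /eqP ->.
  by rewrite divfK.
have Xf := Xae Xhg mf hae.
by split => //; rewrite -(Nae Xhg Xf hae).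
Qed.

Lemma mono f g : L0 f -> Xs g -> ale mu (fun _ => 0) f -> ale mu f g ->
  Xs f /\ nrm f <= nrm g.
Proof.
move=> mf Xg hf0 hfg.
pose h := fun x => f x * (g x)^-1.
have mh : measurable_fun setT h.
  apply: measurable_funM => //.
  exact: measurableT_comp (@inv_meas R) (XL0 Xg).
have h1 : \forall x \ae mu, 0 <= h x <= 1.
  apply: filterS2 hf0 hfg => x /= h0 hx; rewrite /h.
  have [g0|g0] := eqVneq (g x) 0; first by rewrite g0 invr0 mulr0 lexx ler01.
  have gp : 0 < g x by rewrite lt_neqAle eq_sym g0 (le_trans h0 hx).
  by rewrite divr_ge0 ?(ltW gp) //= ler_pdivrMr // mul1r.
have [Xhg Nhg] := mult01 mh h1 Xg.
have hae : aeq mu (fun x => h x * g x) f.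
  apply: filterS2 hf0 hfg => x /= h0 hx; rewrite /h.
  have [g0|g0] := eqVneq (g x) 0.
    rewrite g0 mulr0; apply/eqP; rewrite eq_le h0 /=.
    by move: hx; rewrite g0.
  by rewrite divfK.
have Xf := Xae Xhg mf hae.
by split => //; rewrite -(Nae Xhg Xf hae).
Qed.
End Core.

Section LinfSec.
Context d (T : measurableType d) (R : realType) (mu : {measure set T -> \bar R}).

Lemma Linf_bound h : Linf mu h ->
  0 <= Linf_norm mu h /\ \forall x \ae mu, `|h x| <= Linf_norm mu h.
Proof.
rewrite /Linf /Linf_norm; case=> mh; rewrite unlock /=.
case: ifPn => hmu.
- set E := ess_sup _ _ => Eoo.
  have E0 : (0 <= E)%E.
    by apply: ess_sup_gee => //; apply: nearW => x /=; rewrite lee_fin.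
  have Efin : E = (fine E)%:E by rewrite fineK // ge0_fin_numE.
  split; first exact: fine_ge0.
  have := ess_sup_ge mu (abse \o (EFin \o h)); rewrite -/E; apply: filterS => x /=.
  by rewrite {1}Efin lee_fin.
- move=> _; split => //.
  have m0 : mu setT = 0.
    by apply/eqP; rewrite eq_le measure_ge0 andbT leNgt.
  by exists setT; split.
Qed.
End LinfSec.

Unset Implicit Arguments.
Set Strict Implicit.

Theorem theorem3p7 (d : measure_display) (T : measurableType d) (R : realType)
    (mu : {measure set T -> \bar R}) (Xs : set (T -> R)) (nrm : (T -> R) -> R) :
  (mu [set: T] < +oo)%E ->
  banach_strictly_rectangular mu Xs nrm ->
  subsequence_property mu Xs nrm ->
  (* (i) *)
  (forall h f, Linf mu h -> Xs f ->
     [/\ Xs (fun x => h x * f x),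
         nrm (fun x => `|h x * f x|) <= Linf_norm mu h * nrm (fun x => `|f x|) &
         nrm (fun x => h x * f x) <= 4 * Linf_norm mu h * nrm f])
  (* (ii) *)
  /\ ideal_L0 mu Xs
  (* (iii) *)
  /\ [/\ exists C : R, 0 < C /\ monotone_with mu Xs nrm C,
         forall C : R, 0 < C -> monotone_with mu Xs nrm C ->
           forall g h, Xs g -> Xs h ->
             nrm (fun x => `|g x| - `|h x|) <= 4 * C * nrm (fun x => g x - h x) &
         forall f, Xs f -> forall e : R, 0 < e -> exists2 del : R, 0 < del &
           forall g, Xs g -> nrm (fun x => g x - f x) < del ->
             nrm (fun x => `|g x| - `|f x|) < e]
  (* (iv) *)
  /\ [/\ is_norm_on mu Xs (fun f => nrm (fun x => `|f x|)),
         exists c1 c2 : R, [/\ 0 < c1, 0 < c2 & forall f, Xs f ->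
           nrm (fun x => `|f x|) <= c1 * nrm f /\ nrm f <= c2 * nrm (fun x => `|f x|)],
         (forall f, Xs f -> ale mu (fun _ => 0) f -> nrm (fun x => `|f x|) = nrm f) &
         banach_function_space mu Xs (fun f => nrm (fun x => `|f x|))].
Proof.
move=> _ [[HV HN HC] HR] HS.
have Hmono := mono HV HN HC HR HS.
have Hdom := dom HV HN HC HR HS.
have L0abs (f : T -> R) : L0 f -> L0 (fun x => `|f x|).
  by move=> mf; apply: measurableT_comp mf; exact: normr_measurable.
have Xabs f : Xs f -> Xs (fun x => `|f x|) /\ nrm (fun x => `|f x|) <= 2 * nrm f.
  move=> Xf; apply: (Hdom _ f) => //; first exact/L0abs/(XL0 HV).
  by apply: nearW => x /=; rewrite normr_id.
have Nabs f : Xs f -> nrm f <= 2 * nrm (fun x => `|f x|).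
  move=> Xf; have [Xa _] := Xabs f Xf.
  apply: (proj2 (Hdom f _ (XL0 HV Xf) Xa _)).
  by apply: nearW => x /=; rewrite normr_id.
have Hideal : ideal_L0 mu Xs.
  by move=> f g mf Xg hfg; have [] := Hdom f g mf Xg hfg.
have Xsub f g : Xs f -> Xs g -> Xs (fun x => f x - g x) := fun Xf Xg => Xsub HV Xf Xg.
have Hdist g h : Xs g -> Xs h ->
    nrm (fun x => `|g x| - `|h x|) <= 2 * nrm (fun x => g x - h x).
  move=> Xg Xh; apply: (proj2 (Hdom _ _ _ (Xsub _ _ Xg Xh) _)).
    apply: measurable_funB; exact/L0abs/(XL0 HV).
  by apply: nearW => x /=; exact: ler_dist_dist.
split.
  move=> h f Lh Xf.
  have [M0 Hb] := Linf_bound Lh.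
  move: M0 Hb; set M := Linf_norm mu h => M0 Hb.
  have mhf : L0 (fun x => h x * f x).
    by apply: measurable_funM; [exact: (proj1 Lh) | exact: (XL0 HV Xf)].
  have hb : ale mu (fun x => `|h x * f x|) (fun x => `|M * f x|).
    apply: filterS Hb => x hx /=; rewrite !normrM (ger0_norm M0).
    by apply: ler_wpM2r.
  have [Xhf Nhf] := Hdom _ _ mhf (XZ HV M Xf) hb.
  have [Xa _] := Xabs f Xf.
  split => //.
    have H1 : ale mu (fun _ => 0) (fun x => `|h x * f x|) by apply: nearW => x /=.
    have H2 : ale mu (fun x => `|h x * f x|) (fun x => M * `|f x|).
      by apply: filterS Hb => x hx /=; rewrite normrM; exact: ler_wpM2r.
    have [_ H] := Hmono _ _ (L0abs _ mhf) (XZ HV M Xa) H1 H2.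
    by rewrite -(NZp HN Xa).
  rewrite (NZp HN Xf) // in Nhf.
  have := Nge0 HN Xf; nra.
split => //.
split.
{ split.
- exists (1 : R); split => // f g Xf Xg h0 hfg; rewrite mul1r.
  exact: (proj2 (Hmono _ _ (XL0 HV Xf) Xg h0 hfg)).
- move=> C C0 HmC g h Xg Xh.
  have Xgh := Xsub _ _ Xg Xh.
  have [Xa _] := Xabs _ Xgh.
  have ha1 : ale mu (fun _ => 0) (fun x => `|g x - h x|) by apply: nearW => x /=.
  have ha2 : ale mu (fun x => `|g x - h x|) (fun x => `|g x - h x|) by apply: nearW => x /=.
  have hle := HmC _ _ Xa Xa ha1 ha2.
  have := Hdist g h Xg Xh; have := Nabs _ Xgh; have := Nge0 HN Xa; have := Nge0 HN Xgh.
  move: hle; set L := nrm (fun x => `|g x| - `|h x|); set N := nrm (fun x => g x - h x).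
  set z := nrm _ => hle N0 z0 Nz LN.
  case: (lerP 1 C) => C1; first by nra.
  have zz : z <= 0 by nra.
  nra.
- move=> f Xf e e0; exists (e / 2); first by rewrite divr_gt0.
  move=> g Xg hg; have := Hdist g f Xg Xf; lra. }
have Hnorm : is_norm_on mu Xs (fun f => nrm (fun x => `|f x|)).
  split.
  - move=> f g Xf Xg hfg; apply: (Nae HN (proj1 (Xabs _ Xf)) (proj1 (Xabs _ Xg))).
    by apply: filterS hfg => x /= ->.
  - by move=> f Xf; apply: (Nge0 HN); exact: (proj1 (Xabs _ Xf)).
  - move=> f Xf; rewrite (N0 HN (proj1 (Xabs _ Xf))); split => H; apply: filterS H => x /=.
      by move/eqP; rewrite normr_eq0 => /eqP.
    by move=> ->; rewrite normr0.
  - move=> a f Xf.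
    have -> : (fun x => `|a * f x|) = (fun x => `|a| * `|f x|).
      by apply: funext => x; rewrite normrM.
    by rewrite (NZp HN (proj1 (Xabs _ Xf))).
  - move=> f g Xf Xg.
    have [Xa _] := Xabs _ Xf; have [Xb _] := Xabs _ Xg.
    have mfg : L0 (fun x => `|f x + g x|).
      by apply: L0abs; apply: measurable_funD; [exact: (XL0 HV Xf) | exact: (XL0 HV Xg)].
    have H1 : ale mu (fun _ => 0) (fun x => `|f x + g x|) by apply: nearW => x /=.
    have H2 : ale mu (fun x => `|f x + g x|) (fun x => `|f x| + `|g x|).
      by apply: nearW => x; exact: ler_normD.
    have [_ H] := Hmono _ _ mfg (XD HV Xa Xb) H1 H2.
    exact: le_trans H (ND HN Xa Xb).
split => //.
- exists 2, 2; split => // f Xf; split; [exact: (proj2 (Xabs _ Xf)) | exact: Nabs].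
- move=> f Xf h0; apply: (Nae HN (proj1 (Xabs _ Xf)) Xf).
  by apply: filterS h0 => x /= hx; exact: ger0_norm.
split => //.
- split => //.
  move=> u Xu Hc.
  have Hc' : forall e : R, 0 < e -> exists N : nat, forall m n : nat, (N <= m)%N -> (N <= n)%N ->
      nrm (fun x => u m x - u n x) < e.
    move=> e e0; have [N HK] := Hc (e / 2) (divr_gt0 e0 (ltr0Sn _ 1)); exists N => m n Nm Nn.
    have := HK m n Nm Nn; have := Nabs _ (Xsub _ _ (Xu m) (Xu n)); lra.
  have [f [Xf Hf]] := HC u Xu Hc'.
  exists f; split => //.
  apply: (@squeeze_cvgr _ _ _ _ (fun _ => 0) (fun n => 2 * nrm (fun x => u n x - f x))).
  + apply: nearW => n; have [Xa Na] := Xabs _ (Xsub _ _ (Xu n) Xf).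
    by rewrite Na andbT; exact: (Nge0 HN Xa).
  + exact: cvg_cst.
  + rewrite -(mulr0 2); apply: cvgM; [exact: cvg_cst | exact: Hf].
- move=> f g Xf Xg hfg; have [Xa _] := Xabs _ Xf; have [Xb _] := Xabs _ Xg.
  have ha1 : ale mu (fun _ => 0) (fun x => `|f x|) by apply: nearW => x /=.
  exact: (proj2 (Hmono _ _ (XL0 HV Xa) Xb ha1 hfg)).
Qed.
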